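(* Let $S$ be an inductive left $E$-monoid with left $E$-modal operation $\cdot$, and for $s\in S$, $e\in E$ put $s^e=(s\cdot e)s$. Then for all $s,t\in S$ and $e,f\in E$: (ZS1) $(st)\cdot e=s\cdot(t\cdot e)$; (ZS2) $s\cdot(e\wedge f)=(s\cdot e)\wedge(s^e\cdot f)$; (ZS4) $(st)^e=s^{t\cdot e}t^e$. Moreover (ZS3) $(s^e)^f=s^{e\wedge f}$ holds for all $s\in S$, $e,f\in E$ if and only if $E$ has definable meets. In that case the operation $(e,s)\otimes(f,t)=(e\wedge(s\cdot f),(s\cdot f)st)$ on $E\times S$ is associative (giving the Zappa-Szép product $E\bowtie S$), $Rest(E,S)$ is a subsemigroup of $E\bowtie S$ (its multiplication being the restriction of $\otimes$), $\hat E=\{(e,e)\mid e\in E\}$ is a semilattice under $\otimes$ isomorphic to $(E,\wedge)$, and every subsemigroup $T$ of $E\bowtie S$ which is a left restriction semigroup under some unary operation $D$ with $D(T)=\hat E$ is contained in $Rest(E,S)$.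
   Context: For a semigroup $S$, $E(S)$ is its set of idempotents; for $e,f\in E(S)$, $e\le_r f$ iff $e=ef$. $E\subseteq E(S)$ is right pre-reduced if $e=ef$ and $f=fe$ imply $e=f$ for $e,f\in E$. Let $S$ be a monoid and $1\in E\subseteq E(S)$. $S$ is an inductive left $E$-monoid if $E$ is right pre-reduced, $(E,\le_r)$ is a meet-semilattice with meet $\wedge$, and (I1') for all $t\in S$, $e\in E$ there is $t\cdot e\in E$ such that for all $s\in S$: $ste=st$ iff $s(t\cdot e)=s$ (the necessarily unique map $(t,e)\mapsto t\cdot e$ is the left $E$-modal operation); (I2') for $s\in S$, $e,f\in E$: $se=sf=s$ implies $s(e\wedge f)=s$. Such $S$ has definable meets if $(e\cdot f)e\in E$ for all $e,f\in E$. $Rest(E,S)$ is the set $\{(e,s)\in E\times S\mid es=s\}$ with multiplication $(e,s)(f,t)=(e\wedge(s\cdot f),(e\wedge(s\cdot f))st)$ and $D((e,s))=(e,e)$. A left restriction semigroup is a semigroup with unary $D$ satisfying $D(x)x=x$, $D(x)D(y)=D(y)D(x)$, $D(D(x)y)=D(x)D(y)$, $xD(y)=D(xy)x$; $D(T)=\{D(x)\mid x\in T\}$. *)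

(* Defs.v *)
Set Implicit Arguments.

Section Defs.
Variables (S : Type) (mul : S -> S -> S) (one : S).
Local Infix "*" := mul.

Definition is_monoid : Prop :=
  (forall x y z, x * (y * z) = (x * y) * z) /\
  (forall x, one * x = x) /\ (forall x, x * one = x).

Definition idempotent (e : S) : Prop := e * e = e.

Definition le_r (e f : S) : Prop := e = e * f.

Definition right_pre_reduced (E : S -> Prop) : Prop :=
  forall e f, E e -> E f -> e = e * f -> f = f * e -> e = f.

Definition is_meet_of (E : S -> Prop) (meet : S -> S -> S) : Prop :=
  forall e f, E e -> E f ->
    E (meet e f) /\ le_r (meet e f) e /\ le_r (meet e f) f /\
    (forall g, E g -> le_r g e -> le_r g f -> le_r g (meet e f)).

Definition is_left_E_modal (E : S -> Prop) (dot : S -> S -> S) : Prop :=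
  forall t e, E e ->
    E (dot t e) /\ (forall s, (s * t) * e = s * t <-> s * dot t e = s).

Definition inductive_left_E_monoid (E : S -> Prop) (meet dot : S -> S -> S)
  : Prop :=
  is_monoid /\ E one /\ (forall e, E e -> idempotent e) /\
  right_pre_reduced E /\ is_meet_of E meet /\ is_left_E_modal E dot /\
  (forall s e f, E e -> E f -> s * e = s -> s * f = s -> s * meet e f = s).

Definition definable_meets (E : S -> Prop) (dot : S -> S -> S) : Prop :=
  forall e f, E e -> E f -> E (dot e f * e).

Definition sup (dot : S -> S -> S) (s e : S) : S := dot s e * s.

Definition otimes (meet dot : S -> S -> S) (x y : S * S) : S * S :=
  (meet (fst x) (dot (snd x) (fst y)), dot (snd x) (fst y) * snd x * snd y).

Definition in_ExS (E : S -> Prop) (x : S * S) : Prop := E (fst x).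

Definition in_Rest (E : S -> Prop) (x : S * S) : Prop :=
  E (fst x) /\ fst x * snd x = snd x.

Definition rest_mul (meet dot : S -> S -> S) (x y : S * S) : S * S :=
  let g := meet (fst x) (dot (snd x) (fst y)) in (g, g * snd x * snd y).

Definition in_Ehat (E : S -> Prop) (x : S * S) : Prop :=
  exists e, E e /\ x = (e, e).

Definition left_restriction_on (T : S * S -> Prop)
  (op : S * S -> S * S -> S * S) (D : S * S -> S * S) : Prop :=
  (forall x, T x -> T (D x)) /\
  (forall x, T x -> op (D x) x = x) /\
  (forall x y, T x -> T y -> op (D x) (D y) = op (D y) (D x)) /\
  (forall x y, T x -> T y -> D (op (D x) y) = op (D x) (D y)) /\
  (forall x y, T x -> T y -> op x (D y) = op (D (op x y)) x).
End Defs.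

(* Main.v *)
Require Import Defs.
From Stdlib Require Import Setoid.

Theorem proposition6p2 (S : Type) (mul : S -> S -> S) (one : S)
  (E : S -> Prop) (meet dot : S -> S -> S) :
  inductive_left_E_monoid mul one E meet dot ->
  (* (ZS1) *)
  (forall s t e, E e -> dot (mul s t) e = dot s (dot t e)) /\
  (* (ZS2) *)
  (forall s e f, E e -> E f ->
     dot s (meet e f) = meet (dot s e) (dot (sup mul dot s e) f)) /\
  (* (ZS4) *)
  (forall s t e, E e ->
     sup mul dot (mul s t) e = mul (sup mul dot s (dot t e)) (sup mul dot t e)) /\
  (* (ZS3) iff definable meets *)
  ((forall s e f, E e -> E f ->
      sup mul dot (sup mul dot s e) f = sup mul dot s (meet e f))
   <-> definable_meets mul E dot) /\
  (definable_meets mul E dot ->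
     (* E x S is closed under otimes, which is associative *)
     (forall x y, in_ExS E x -> in_ExS E y -> in_ExS E (otimes mul meet dot x y)) /\
     (forall x y z, in_ExS E x -> in_ExS E y -> in_ExS E z ->
        otimes mul meet dot (otimes mul meet dot x y) z =
        otimes mul meet dot x (otimes mul meet dot y z)) /\
     (* Rest(E,S) is a subsemigroup, with multiplication the restriction of otimes *)
     (forall x y, in_Rest mul E x -> in_Rest mul E y ->
        in_Rest mul E (otimes mul meet dot x y) /\
        rest_mul mul meet dot x y = otimes mul meet dot x y) /\
     (* Ehat is a semilattice under otimes, isomorphic to (E, meet) via e |-> (e,e) *)
     (forall e f, E e -> E f ->
        otimes mul meet dot (e, e) (f, f) = (meet e f, meet e f)) /\
     (forall x y, in_Ehat E x -> in_Ehat E y ->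
        in_Ehat E (otimes mul meet dot x y) /\
        otimes mul meet dot x x = x /\
        otimes mul meet dot x y = otimes mul meet dot y x) /\
     (* subsemigroups that are left restriction semigroups with D(T) = Ehat *)
     (forall (T : S * S -> Prop) (D : S * S -> S * S),
        (forall x, T x -> in_ExS E x) ->
        (forall x y, T x -> T y -> T (otimes mul meet dot x y)) ->
        left_restriction_on T (otimes mul meet dot) D ->
        (forall x, (exists y, T y /\ x = D y) <-> in_Ehat E x) ->
        forall x, T x -> in_Rest mul E x)).
Proof.
  intros [[assoc [idl idr]] [E1 [Eid0 [rpr [Hmeet [Hdot I2]]]]]].
  assert (Eid : forall e, E e -> mul e e = e) by (intros; apply Eid0; auto).
  assert (uniq : forall g g', E g -> E g' ->
     (forall u, mul u g = u <-> mul u g' = u) -> g = g').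
  { intros g g' Hg Hg' H. apply rpr; auto.
    - symmetry; apply H; apply Eid; auto.
    - symmetry; apply H; apply Eid; auto. }
  assert (Emeet : forall a b, E a -> E b -> E (meet a b))
    by (intros a b Ha Hb; apply (Hmeet a b Ha Hb)).
  assert (Edot : forall t e, E e -> E (dot t e))
    by (intros t e He; apply (Hdot t e He)).
  assert (mchar : forall a b u, E a -> E b ->
     (mul u (meet a b) = u <-> mul u a = u /\ mul u b = u)).
  { intros a b u Ha Hb. destruct (Hmeet a b Ha Hb) as [Em [la [lb _]]].
    unfold le_r in la, lb. split.
    - intro Hu. split.
      + transitivity (mul (mul u (meet a b)) a). rewrite Hu; reflexivity.
        rewrite <- assoc, <- la; exact Hu.
      + transitivity (mul (mul u (meet a b)) b). rewrite Hu; reflexivity.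
        rewrite <- assoc, <- lb; exact Hu.
    - intros [h1 h2]. apply I2; auto. }
  assert (dchar : forall t e u, E e ->
     (mul u (dot t e) = u <-> mul (mul u t) e = mul u t)).
  { intros t e u He. destruct (Hdot t e He) as [_ H]. split; apply H. }
  assert (factF : forall t e, E e -> mul (mul (dot t e) t) e = mul (dot t e) t).
  { intros t e He. apply dchar; auto. }
  assert (dot1 : forall e, E e -> dot one e = e).
  { intros e He. apply uniq; auto. intro u. rewrite dchar, idr; auto. tauto. }
  assert (ZS1 : forall s t e, E e -> dot (mul s t) e = dot s (dot t e)).
  { intros s t e He. apply uniq; auto. intro u.
    rewrite dchar, dchar, dchar, assoc; auto. tauto. }
  assert (L2 : forall a c, E a -> E c -> meet a (dot a c) = meet a c).
  { intros a c Ha Hc. apply uniq; auto. intro u.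
    rewrite mchar, mchar, dchar; auto.
    split; intros [h1 h2]; split; auto.
    - rewrite h1 in h2; auto.
    - rewrite h1; auto. }
  assert (DM : forall a c, E a -> E c -> E (mul (dot a c) a) ->
     mul (dot a c) a = meet a c).
  { intros a c Ha Hc Hx. apply uniq; auto. intro u. rewrite mchar; auto. split.
    - intro h. split.
      + transitivity (mul (mul u (mul (dot a c) a)) a). rewrite h; reflexivity.
        rewrite <- !assoc, (Eid a Ha). exact h.
      + transitivity (mul (mul u (mul (dot a c) a)) c). rewrite h; reflexivity.
        rewrite <- assoc, factF; auto.
    - intros [h1 h2].
      assert (h3 : mul u (dot a c) = u).
      { apply dchar; auto. rewrite h1, h2. reflexivity. }
      rewrite assoc, h3, h1. reflexivity. }
  assert (meetA : forall a b c, E a -> E b -> E c ->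
     meet (meet a b) c = meet a (meet b c)).
  { intros a b c Ha Hb Hc. apply uniq; auto. intro u.
    rewrite !mchar; auto. tauto. }
  assert (ZS2 : forall s e f, E e -> E f ->
     dot s (meet e f) = meet (dot s e) (dot (sup mul dot s e) f)).
  { intros s e f He Hf. unfold sup. rewrite ZS1; auto.
    rewrite L2; auto.
    apply uniq; auto. intro u.
    rewrite dchar, mchar, mchar, dchar, dchar; auto. tauto. }
  refine (conj ZS1 (conj ZS2 _)).
  assert (ZS4 : forall s t e, E e ->
     sup mul dot (mul s t) e = mul (sup mul dot s (dot t e)) (sup mul dot t e)).
  { intros s t e He. unfold sup. rewrite ZS1; auto.
    rewrite !assoc. rewrite factF; auto. }
  split; [exact ZS4|].
  split.
  { split.
    - intros H e f He Hf. specialize (H one e f He Hf). unfold sup in H.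
      rewrite dot1, idr, idr, dot1 in H; auto. unfold definable_meets.
      rewrite H. auto.
    - intros DMh s e f He Hf. unfold sup.
      rewrite ZS1, assoc, DM; auto.
      rewrite ZS2; auto. unfold sup. rewrite ZS1, L2; auto. }
  intro DMh.
  assert (DM' : forall a c, E a -> E c -> mul (dot a c) a = meet a c)
    by (intros; apply DM; auto; apply DMh; auto).
  split.
  { intros [e s] [f t] He Hf. unfold in_ExS, otimes in *; simpl in *. auto. }
  split.
  { intros [e s] [f t] [g u] He Hf Hg. unfold in_ExS, otimes in *; simpl in *.
    rewrite (ZS1 _ t g), (ZS1 _ s (dot t g)); auto.
    rewrite (ZS2 s f); auto. unfold sup.
    rewrite (ZS1 (dot s f) s (dot t g)), L2; auto.
    f_equal.
    - rewrite meetA; auto. rewrite L2; auto.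
    - rewrite !assoc. rewrite DM'; auto.
      assert (Hm : mul (meet (dot s f) (dot s (dot t g))) (dot s (dot t g))
                   = meet (dot s f) (dot s (dot t g))).
      { assert (Em : E (meet (dot s f) (dot s (dot t g)))) by auto.
        destruct (proj1 (mchar _ _ (meet (dot s f) (dot s (dot t g))) (Edot _ _ Hf)
           (Edot _ _ (Edot _ _ Hg))) (Eid _ Em)) as [_ h]. exact h. }
      apply dchar in Hm; auto. rewrite Hm. reflexivity. }
  split.
  { intros [e s] [f t] [He hs] [Hf ht]. unfold in_Rest, otimes, rest_mul in *;
      simpl in *.
    assert (Hp : dot s f = dot e (dot s f)).
    { symmetry. rewrite <- (ZS1 e s f Hf), hs. reflexivity. }
    assert (K : meet e (dot s f) = mul (dot s f) e).
    { transitivity (meet e (dot e (dot s f))). { symmetry; apply L2; auto. } rewrite <- DM', <- Hp; auto. f_equal; symmetry; exact Hp. }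
    assert (K2 : mul (meet e (dot s f)) s = mul (dot s f) s).
    { rewrite K, <- assoc, hs. reflexivity. }
    split; [split|].
    - auto.
    - destruct (Hmeet e (dot s f) He (Edot _ _ Hf)) as [_ [_ [lb _]]].
      unfold le_r in lb. rewrite !assoc, <- lb, K2. reflexivity.
    - f_equal. rewrite K2. reflexivity. }
  assert (EH : forall e f, E e -> E f ->
     otimes mul meet dot (e, e) (f, f) = (meet e f, meet e f)).
  { intros e f He Hf. unfold otimes; simpl. rewrite L2, factF, DM'; auto. }
  assert (mid : forall e, E e -> meet e e = e).
  { intros e He. apply uniq; auto. intro u. rewrite mchar; auto. tauto. }
  assert (mC : forall e f, E e -> E f -> meet e f = meet f e).
  { intros e f He Hf. apply uniq; auto. intro u. rewrite !mchar; auto. tauto. }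
  split; [exact EH|].
  split.
  { intros x y [e [He ->]] [f [Hf ->]].
    split; [rewrite EH; auto; exists (meet e f); auto|].
    split; [rewrite EH, mid; auto|]. rewrite !EH; auto. rewrite (mC e f); auto. }
  intros T D HT Hcl [LR1 [LR2 _]] HD x Tx.
  destruct (proj1 (HD (D x)) (ex_intro _ x (conj Tx eq_refl))) as [g [Eg Dx]].
  pose proof (LR2 x Tx) as H. rewrite Dx in H.
  destruct x as [e s]. pose proof (HT _ Tx) as He. unfold in_ExS in He; simpl in He.
  unfold otimes in H; simpl in H. injection H as h1 h2.
  rewrite DM' in h2; auto. rewrite L2 in h1; auto. rewrite h1 in h2.
  split; simpl; auto.
Qed.
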